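(* Let $v \ge 147$ be an integer. Then $\beta(3,v,4) \le v-2$, and \[ \beta(3,v,4) \ge \begin{cases} v-3 & \text{if } v \equiv 0 \text{ or } 1 \pmod 3,\\ v-5 & \text{if } v \equiv 2 \pmod 3. \end{cases} \]
   Context: For integers $v \ge k \ge 2$, a $(v,k)$-packing is a pair $(X,\mathcal{B})$ where $X$ is a set of $v$ points and $\mathcal{B}$ is a set of $k$-subsets of $X$ (blocks) such that every pair of distinct points lies in at most one block. A partial parallel class (PPC) is a set of pairwise disjoint blocks; its size is the number of blocks. A PPC of size $\rho$ is maximum if the packing has no PPC of size $\rho+1$. $\beta(\rho,v,k)$ denotes the maximum number of blocks in a $(v,k)$-packing in which the maximum PPC has size $\rho$. *)

(* Defs.v *)
From mathcomp Require Import all_boot.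
Set Implicit Arguments. Unset Strict Implicit. Unset Printing Implicit Defensive.

Definition is_packing (v k : nat) (B : {set {set 'I_v}}) : bool :=
  [forall b in B, #|b| == k] &&
  [forall x : 'I_v, forall y : 'I_v,
     (x != y) ==> (#|[set b in B | (x \in b) && (y \in b)]| <= 1)].

Definition is_ppc (v : nat) (B P : {set {set 'I_v}}) : bool :=
  (P \subset B) &&
  [forall b1 in P, forall b2 in P, (b1 != b2) ==> [disjoint b1 & b2]].

Definition max_ppc_size (v : nat) (B : {set {set 'I_v}}) (rho : nat) : bool :=
  [exists P : {set {set 'I_v}}, is_ppc B P && (#|P| == rho)] &&
  ~~ [exists P : {set {set 'I_v}}, is_ppc B P && (#|P| == rho.+1)].

Definition beta (rho v k : nat) : nat :=
  \max_(B : {set {set 'I_v}} | is_packing k B && max_ppc_size B rho) #|B|.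

(* Main.v *)
Require Import Defs.
From mathcomp Require Import all_boot.
From mathcomp Require Import zify.
Set Implicit Arguments. Unset Strict Implicit. Unset Printing Implicit Defensive.

Lemma disjointP (T : finType) (A B : {pred T}) :
  reflect (forall x, x \in A -> x \in B -> False) [disjoint A & B].
Proof.
apply: (iffP pred0P) => [H x xA xB|H x /=]; first by have := H x; rewrite /= xA xB.
by apply/negbTE/negP => /andP[xA xB]; exact: H x xA xB.
Qed.

Lemma card_bigcup_le (T I : finType) (P : pred I) (F : I -> {set T}) :
  #|\bigcup_(i | P i) F i| <= \sum_(i | P i) #|F i|.
Proof.
elim/big_rec2: _ => [|i U n _ IH]; first by rewrite cards0.
by rewrite (leq_trans (leq_card_setU _ _).1) // leq_add2l.
Qed.

Lemma sub_card (T : finType) (A : {set T}) k :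
  k <= #|A| -> exists2 A' : {set T}, A' \subset A & #|A'| = k.
Proof.
move=> hk; exists [set x : T | x \in take k (enum A)].
  by apply/subsetP => x; rewrite inE => /mem_take; rewrite mem_enum.
rewrite cardsE; apply/eqP; rewrite (card_uniqP _) ?size_takel -?cardE //.
by apply: take_uniq; apply: enum_uniq.
Qed.

Lemma ppcP v (C M : {set {set 'I_v}}) :
  reflect (M \subset C /\ {in M &, forall b1 b2 : {set 'I_v}, b1 != b2 -> [disjoint b1 & b2]})
    (is_ppc C M).
Proof.
apply: (iffP andP) => [[s /forallP H]|[s H]]; split=> //.
  move=> b1 b2 h1 h2; move: (H b1); rewrite h1 /= => /forallP/(_ b2).
  by rewrite h2 /= => /implyP.
apply/forallP => b1; apply/implyP => h1; apply/forallP => b2; apply/implyP => h2.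
by apply/implyP; apply: H.
Qed.

Lemma ppc_sub v (C M M' : {set {set 'I_v}}) :
  is_ppc C M -> M' \subset M -> is_ppc C M'.
Proof.
move=> /ppcP[s H] sub; apply/ppcP; split; first exact: subset_trans sub s.
by move=> b1 b2 h1 h2; apply: H; apply: (subsetP sub).
Qed.

Lemma ppc0 v (C : {set {set 'I_v}}) : is_ppc C set0.
Proof. by apply/ppcP; split; [apply: sub0set | move=> b1 b2; rewrite inE]. Qed.

Lemma cover0 v : cover (set0 : {set {set 'I_v}}) = set0.
Proof. by rewrite /cover big_set0. Qed.

Lemma ppc_add v (C M : {set {set 'I_v}}) b :
  is_ppc C M -> b \in C -> b != set0 -> [disjoint b & cover M] ->
  is_ppc C (b |: M) /\ #|b |: M| = #|M|.+1.
Proof.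
move=> /ppcP[s H] bC b0 db.
have bM : b \notin M.
  apply/negP => bM; case/set0Pn: b0 => x xb.
  by move/disjointP: db => /(_ x xb); apply; apply/bigcupP; exists b.
split; last by rewrite cardsU1 bM.
apply/ppcP; split.
  by apply/subsetP => c; rewrite !inE => /orP[/eqP->//|cM]; apply: (subsetP s).
have dc : forall c, c \in M -> [disjoint b & c].
  move=> c cM; apply: disjointWr db; apply/subsetP => y yc.
  by apply/bigcupP; exists c.
move=> b1 b2; rewrite !inE => /orP[/eqP->|h1] /orP[/eqP->|h2]; rewrite ?eqxx //.
- by move=> _; apply: dc.
- by move=> _; rewrite disjoint_sym; apply: dc.
- by apply: H.
Qed.

Lemma ar1 a b : 3 < a + b -> 4 - minn b 4 <= a. Proof. lia. Qed.
Lemma ar2 b : 4 - minn b 4 + minn b 4 = 4. Proof. lia. Qed.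

Lemma ar_final v h m b bh l s : 147 <= v -> h <= 3 -> m + h <= 3 -> l <= 4*m*12 ->
  b <= bh + l -> bh <= s -> s <= h * ((v-1)%/3) ->
  (bh + 1 <= s \/ s <= h * ((v-h)%/3)) -> b <= v - 2.
Proof.
move=> hv h3 hm hl hb hbh hs hor.
have [E|[E|[E|E]]] : h = 0 \/ h = 1 \/ h = 2 \/ h = 3 by lia.
all: subst h; lia.
Qed.
Lemma ar3 a v : a + 1 <= v -> a <= v - 1. Proof. lia. Qed.
Lemma ar4 a i d r s : a + i = d + r -> r <= s -> 0 < i -> a + 1 <= d + s.
Proof. lia. Qed.
Lemma ar5 d k v : 3 * d + k + 1 <= v -> d * 3 <= v - (1 + k).
Proof. lia. Qed.

Section Upper.
Variables (v : nat) (B : {set {set 'I_v}}).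
Hypothesis pack : is_packing 4 B.
Hypothesis no4 : forall P, is_ppc B P -> #|P| != 4.

Definition A x := [set b in B | x \in b].
Definition deg x := #|A x|.

Lemma pack_uniq b1 b2 x y : b1 \in B -> b2 \in B -> x != y ->
  x \in b1 -> y \in b1 -> x \in b2 -> y \in b2 -> b1 = b2.
Proof.
move=> h1 h2 xy x1 y1 x2 y2.
case/andP: pack => _ /forallP/(_ x)/forallP/(_ y)/implyP/(_ xy)/card_le1_eqP H.
by apply: H; rewrite inE ?h1 ?h2 ?x1 ?y1 ?x2 ?y2.
Qed.

Lemma card4 b : b \in B -> #|b| = 4.
Proof. by case/andP: pack => /forallP/(_ b) /implyP H _ /H /eqP. Qed.

Lemma cover_card M : is_ppc B M -> #|cover M| = 4 * #|M|.
Proof.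
move=> /ppcP[s H].
have tM : trivIset M by apply/trivIsetP.
rewrite -(eqP tM) (eq_bigr (fun _ => 4)); first by rewrite sum_nat_const mulnC.
by move=> b bM; apply: card4; apply: (subsetP s).
Qed.

Lemma deg_bound x (S : {set 'I_v}) : x \notin S -> (forall b, b \in A x -> [disjoint b & S]) ->
  3 * deg x + #|S| + 1 <= v.
Proof.
move=> xS H.
set Q := [set b :\ x | b in A x].
have injQ : {in A x &, injective (fun b => b :\ x)}.
  move=> b1 b2; rewrite !inE => /andP[_ x1] /andP[_ x2] E.
  by rewrite -(setD1K x1) -(setD1K x2) E.
have cQ : #|Q| = deg x := card_in_imset injQ.
have tQ : trivIset Q.
  apply/trivIsetP => q1 q2 /imsetP[b1 Hb1 ->] /imsetP[b2 Hb2 ->] ne.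
  apply/disjointP => y; rewrite !inE => /andP[yx y1] /andP[_ y2].
  move: Hb1 Hb2 ne; rewrite !inE => /andP[B1 x1] /andP[B2 x2].
  by rewrite (pack_uniq B1 B2 (_ : x != y) x1 y1 x2 y2) ?eqxx // eq_sym.
have sQ : \sum_(q in Q) #|q| = 3 * #|Q|.
  rewrite (eq_bigr (fun _ => 3)); first by rewrite sum_nat_const mulnC.
  move=> q /imsetP[b Hb ->]; move: Hb; rewrite inE => /andP[bB xb].
  by have := cardsD1 x b; rewrite xb card4 // add1n => -[].
have cov : cover Q \subset ~: (x |: S).
  apply/subsetP => y /bigcupP[q /imsetP[b Hb ->]]; rewrite !inE => /andP[yx yb].
  rewrite negb_or yx /=; apply/negP => yS.
  by have := H b Hb; move/disjointP/(_ y yb); rewrite yS; apply.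
have := subset_leq_card cov; have := cardsC (x |: S).
rewrite cardsU1 (negPf xS) card_ord -(eqP tQ) sQ cQ.
lia.
Qed.

Lemma avoid x (S : {set 'I_v}) : 13 <= deg x -> #|S| <= 12 -> x \notin S ->
  exists2 b, b \in A x & [disjoint b & S].
Proof.
move=> hd hS xS.
case: (boolP [exists b in A x, [disjoint b & S]]) => [/existsP[b /andP[]]|/existsPn no].
  by move=> ? ?; exists b.
pose f b := odflt x [pick y in b :&: S].
have fS : forall b, b \in A x -> f b \in b :&: S.
  move=> b Hb; rewrite /f; case: pickP => [y //|none]; exfalso.
  have := no b; rewrite Hb /=; move/negP; apply; apply/disjointP => y yb yS.
  by have := none y; rewrite inE yb yS.
have inj : {in A x &, injective f}.
  move=> b1 b2 H1 H2 E.
  have := fS _ H1; have := fS _ H2; rewrite E !inE => /andP[y2 yS] /andP[y1 _].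
  move: H1 H2; rewrite !inE => /andP[B1 x1] /andP[B2 x2].
  apply: (pack_uniq B1 B2 _ x1 y1 x2 y2).
  by apply/eqP => exy; move: xS; rewrite exy yS.
have : #|f @: A x| <= #|S|.
  apply: subset_leq_card; apply/subsetP => y /imsetP[b Hb ->].
  by have := fS _ Hb; rewrite inE => /andP[].
rewrite card_in_imset // -/(deg x); lia.
Qed.

Definition H := [set x | 13 <= deg x].

Lemma ext j : forall M (T : {set 'I_v}), is_ppc B M -> T \subset H -> [disjoint T & cover M] ->
  #|T| = j -> #|M| + j <= 4 -> exists2 M', is_ppc B M' & #|M'| = #|M| + j.
Proof.
elim: j => [|j IH] M T pM sT dT cT le.
  by exists M; rewrite ?addn0.
have [x xT] : exists x, x \in T by apply/card_gt0P; rewrite cT.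
set S := cover M :|: (T :\ x).
have cS : #|S| <= 12.
  have := (leq_card_setU (cover M) (T :\ x)).1.
  rewrite cover_card //; have := cardsD1 x T; rewrite xT cT add1n => -[] <-.
  rewrite /S; lia.
have xM : x \notin cover M.
  by apply/negP => xM; move/disjointP: dT => /(_ x xT); apply.
have xS : x \notin S by rewrite !inE eqxx (negPf xM).
have hx : 13 <= deg x by move: (subsetP sT x xT); rewrite inE.
have [b Hb db] := avoid hx cS xS.
move: Hb; rewrite inE => /andP[bB xb].
have dbM : [disjoint b & cover M].
  by apply: disjointWr db; apply/subsetP => y yc; rewrite inE yc.
have b0 : b != set0 by apply/set0Pn; exists x.
have [pM1 cM1] := ppc_add pM bB b0 dbM.
have s1 : T :\ x \subset H by apply: subset_trans sT; apply: subD1set.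
have d1 : [disjoint T :\ x & cover (b |: M)].
  apply/disjointP => y; rewrite !inE => /andP[yx yT] /bigcupP[c].
  rewrite !inE => /orP[/eqP-> yb|cM yc].
    by move/disjointP: db => /(_ y yb); apply; rewrite !inE yx yT orbT.
  by move/disjointP: dT => /(_ y yT); apply; apply/bigcupP; exists c.
have c1 : #|T :\ x| = j by have := cardsD1 x T; rewrite xT cT add1n => -[] ->.
have l1 : #|b |: M| + j <= 4 by rewrite cM1 addSnnS.
have [M' pM' cM'] := IH (b |: M) (T :\ x) pM1 s1 d1 c1 l1.
by exists M' => //; rewrite cM' cM1 addSnnS.
Qed.

Lemma ext3 M (T : {set 'I_v}) : is_ppc B M -> T \subset H -> [disjoint T & cover M] ->
  #|M| + #|T| <= 3.
Proof.
move=> pM sT dT; rewrite leqNgt; apply/negP => big.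
have [T' sT' cT'] := @sub_card _ T (minn #|T| 4) (geq_minl _ _).
have [M' sM' cM'] := @sub_card _ M (4 - minn #|T| 4) (ar1 big).
have pM' := ppc_sub pM sM'.
have dT' : [disjoint T' & cover M'].
  apply/disjointP => y yT /bigcupP[c cM yc].
  move/disjointP: dT => /(_ y (subsetP sT' y yT)); apply.
  by apply/bigcupP; exists c => //; apply: (subsetP sM').
have le4 : #|M'| + minn #|T| 4 <= 4 by rewrite cM' ar2.
have [M'' pM'' cM''] := ext pM' (subset_trans sT' sT) dT' cT' le4.
by move: (no4 pM''); rewrite cM'' cM' ar2.
Qed.

Lemma upper : 147 <= v -> #|B| <= v - 2.
Proof.
move=> hv.
have h3 : #|H| <= 3.
  have := ext3 (ppc0 B) (subxx H); rewrite cover0 cards0 add0n; apply.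
  by apply/disjointP => y _; rewrite inE.
set L := [set b in B | [disjoint b & H]].
have [M pML maxM] := @arg_maxnP _ set0 (is_ppc L) (fun M => #|M|) (ppc0 L).
have LB : L \subset B by apply/subsetP => b; rewrite inE => /andP[].
have pMB : is_ppc B M.
  by case/ppcP: pML => s Hd; apply/ppcP; split => //; exact: subset_trans s LB.
have dMH : [disjoint H & cover M].
  apply/disjointP => y yH /bigcupP[c cM yc]; case/ppcP: pML => s _.
  have := subsetP s c cM; rewrite inE => /andP[_ dc].
  by move/disjointP: dc => /(_ y yc yH).
have hM := ext3 pMB (subxx H) dMH.
have Lcov : forall b, b \in L -> ~~ [disjoint b & cover M].
  move=> b bL; apply/negP => db.
  have bB : b \in B := subsetP LB b bL.
  have b0 : b != set0 by rewrite -card_gt0 card4.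
  have [p1 c1] := ppc_add pML bL b0 db.
  by have := maxM _ p1; rewrite /= c1 ltnn.
have Lle : #|L| <= \sum_(p in cover M) deg p.
  apply: leq_trans (card_bigcup_le (mem (cover M)) A).
  apply: subset_leq_card; apply/subsetP => b bL.
  have := Lcov b bL; case/pred0Pn => y /andP[yb yc].
  by apply/bigcupP; exists y => //; rewrite inE (subsetP LB b bL).
have degL : forall p, p \in cover M -> deg p <= 12.
  move=> p pc; rewrite leqNgt; apply/negP => hp.
  by move/disjointP: dMH => /(_ p); apply=> //; rewrite inE.
have Lle2 : #|L| <= 4 * #|M| * 12.
  apply: leq_trans Lle _; rewrite -(cover_card pMB) -sum_nat_const.
  by apply: leq_sum => p pc; exact: degL p pc.
set BH := \bigcup_(x in H) A x.
have BU : #|B| <= #|BH| + #|L|.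
  apply: leq_trans (leq_card_setU BH L).1; apply: subset_leq_card.
  apply/subsetP => b bB; rewrite inE.
  case: (boolP [disjoint b & H]) => [d|/pred0Pn[y /andP[yb yH]]].
    by rewrite orbC inE bB d.
  by apply/orP; left; apply/bigcupP; exists y => //; rewrite inE bB.
have BHle : #|BH| <= \sum_(x in H) deg x := card_bigcup_le (mem H) A.
have degH : forall x, 3 * deg x <= v - 1.
  move=> x; apply: ar3.
  have dj : forall b, b \in A x -> [disjoint b & (set0 : {set 'I_v})].
    by move=> b _; apply/disjointP => y _; rewrite inE.
  have xs0 : x \notin (set0 : {set 'I_v}) by rewrite inE.
  by have := deg_bound xs0 dj; rewrite cards0 addn0.
have S1 : \sum_(x in H) deg x <= #|H| * ((v-1) %/ 3).
  rewrite -sum_nat_const; apply: leq_sum => x _.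
  by rewrite leq_divRL // mulnC; exact: degH x.
have F5 : (#|BH| + 1 <= \sum_(x in H) deg x) \/
          (\sum_(x in H) deg x <= #|H| * ((v - #|H|) %/ 3)).
  case: (boolP [exists b in B, exists x in H, exists y in H,
                  (x != y) && (x \in b) && (y \in b)]).
    case/existsP => b /andP[bB /existsP[x /andP[xH /existsP[y /andP[yH /andP[/andP[xy xb] yb]]]]]].
    left.
    set R := \bigcup_(i | (i \in H) && (i != x)) A i.
    have sub : BH \subset A x :|: R.
      apply/subsetP => c /bigcupP[z zH cz]; rewrite inE.
      case: (eqVneq z x) => [<-|zx]; first by rewrite cz.
      by apply/orP; right; apply/bigcupP; exists z => //; rewrite zH zx.
    have i0 : 0 < #|A x :&: R|.
      apply/card_gt0P; exists b; rewrite inE; apply/andP; split.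
        by rewrite inE bB xb.
      by apply/bigcupP; exists y; [rewrite yH eq_sym xy | rewrite inE bB yb].
    have cU := cardsUI (A x) R.
    have cR := card_bigcup_le (fun i => (i \in H) && (i != x)) A.
    rewrite (bigD1 x xH) /=.
    apply: leq_trans (_ : #|A x :|: R| + 1 <= _); first by rewrite leq_add2r subset_leq_card.
    exact: ar4 cU cR i0.
  move=> /existsPn no; right.
  rewrite -sum_nat_const; apply: leq_sum => x xH.
  have xS : x \notin H :\ x by rewrite !inE eqxx.
  have dj : forall b, b \in A x -> [disjoint b & H :\ x].
    move=> b; rewrite inE => /andP[bB xb]; apply/disjointP => y yb.
    rewrite in_setD1 => /andP[yx yH].
    have xy : x != y by rewrite eq_sym.
    move/negP: (no b); apply; rewrite bB /=; apply/existsP; exists x.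
    rewrite xH /=; apply/existsP; exists y; by rewrite yH xy xb yb.
  have := deg_bound xS dj; rewrite (cardsD1 x H) xH => h.
  by rewrite leq_divRL //; exact: ar5 h.
exact: ar_final hv h3 hM Lle2 BU BHle S1 F5.
Qed.

End Upper.

Definition sh m c k := if c + k < m then c + k else c + k - m.
Lemma shP m c k : c < m -> k < m -> sh m c k < m /\ ((sh m c k = c + k /\ c + k < m) \/ (sh m c k + m = c + k /\ m <= c + k)).
Proof. rewrite /sh; case: ifP => h; lia. Qed.
Definition gl m off s c : seq nat :=
  [:: s; off + c; off + m + sh m c s; off + m + m + sh m c (s + s)].
Lemma common m off s t c d z : 3 <= off -> s < 3 -> t < 3 ->
  sh m c s < m -> sh m c (s + s) < m -> sh m d t < m -> sh m d (t + t) < m ->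
  z \in gl m off s c -> z \in gl m off t d -> c < m -> d < m ->
  (z = s /\ s = t) \/ (z = off + c /\ c = d) \/
  (z = off + m + sh m c s /\ sh m c s = sh m d t) \/
  (z = off + m + m + sh m c (s + s) /\ sh m c (s + s) = sh m d (t + t)).
Proof.
rewrite /gl !inE; move: (sh m c s) (sh m c (s+s)) (sh m d t) (sh m d (t + t)) => a1 a2 b1 b2.
lia.
Qed.
Lemma gl_inter m off s t c d x y : 8 <= m -> 3 <= off -> s < 3 -> t < 3 -> c < m -> d < m ->
  x != y -> x \in gl m off s c -> y \in gl m off s c -> x \in gl m off t d -> y \in gl m off t d ->
  s = t /\ c = d.
Proof.
move=> hm ho hs ht hc hd xy x1 y1 x2 y2.
have [s1 e1] := @shP m c s hc (ltac:(lia)).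
have [s2 e2] := @shP m c (s + s) hc (ltac:(lia)).
have [t1 f1] := @shP m d t hd (ltac:(lia)).
have [t2 f2] := @shP m d (t + t) hd (ltac:(lia)).
have cx := @common m off s t c d x ho hs ht s1 s2 t1 t2 x1 x2 hc hd.
have cy := @common m off s t c d y ho hs ht s1 s2 t1 t2 y1 y2 hc hd.
clear x1 y1 x2 y2.
move: (sh m c s) (sh m c (s+s)) (sh m d t) (sh m d (t + t)) cx cy e1 e2 f1 f2 s1 s2 t1 t2 => a1 a2 b1 b2.
lia.
Qed.



Lemma shE m c k : c + k < m -> sh m c k = c + k.
Proof. by rewrite /sh => ->. Qed.

Section Lower.
Variables (n m off : nat).
Hypothesis hm : 8 <= m.
Hypothesis ho : 3 <= off.
Hypothesis hv : off + 3 * m = n.+1.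

Definition blkl (l : seq nat) : {set 'I_n.+1} := [set x : 'I_n.+1 | nat_of_ord x \in l].

Lemma mem_map_inord (l : seq nat) (x : 'I_n.+1) : all (fun a => a < n.+1) l ->
  (x \in map (@inord n) l) = (nat_of_ord x \in l).
Proof.
move=> H; apply/mapP/idP => [[a al ->]|xl]; first by rewrite inordK // (allP H).
by exists (nat_of_ord x); rewrite ?inord_val.
Qed.

Lemma memblk l (x : 'I_n.+1) : (x \in blkl l) = (nat_of_ord x \in l).
Proof. by rewrite inE. Qed.

Lemma card_blkl l : uniq l -> all (fun a => a < n.+1) l -> #|blkl l| = size l.
Proof.
move=> u H.
have -> : blkl l = [set x in map (@inord n) l].
  by apply/setP => x; rewrite !inE mem_map_inord.
rewrite cardsE (card_uniqP _) ?size_map //.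
rewrite map_inj_in_uniq // => a b al bl E.
by move/(congr1 (@nat_of_ord _)): E; rewrite !inordK //; apply: (allP H).
Qed.

Definition blk s c := blkl (gl m off s c).
Definition E := blkl [:: 0; 1; 2; 3].
Definition G := [set blk (val p.1) (val p.2) | p : 'I_3 * 'I_m].
Definition Bc := if 4 <= off then E |: G else G.

Lemma gl_lt s c : s < 3 -> c < m -> all (fun a => a < n.+1) (gl m off s c).
Proof.
move=> hs hc.
have [s1 _] := @shP m c s hc (ltac:(lia)).
have [s2 _] := @shP m c (s + s) hc (ltac:(lia)).
rewrite /gl /=. move: (sh m c s) (sh m c (s + s)) s1 s2 => a b s1 s2.
apply/and5P; split => //; lia.
Qed.

Lemma gl_uniq s c : s < 3 -> c < m -> uniq (gl m off s c).
Proof.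
move=> hs hc.
have [s1 _] := @shP m c s hc (ltac:(lia)).
have [s2 _] := @shP m c (s + s) hc (ltac:(lia)).
rewrite /gl /= !inE. move: (sh m c s) (sh m c (s + s)) s1 s2 => a b s1 s2.
apply/and4P; split => //; lia.
Qed.

Lemma memBc b : b \in Bc ->
  (exists s c, [/\ s < 3, c < m & b = blk s c]) \/ (b = E /\ 4 <= off).
Proof.
rewrite /Bc; case: ifP => h4.
  rewrite !inE => /orP[/eqP->|]; first by right.
  by case/imsetP => -[s c] _ ->; left; exists s, c.
by case/imsetP => -[s c] _ ->; left; exists s, c.
Qed.

Lemma card_Bc b : b \in Bc -> #|b| = 4.
Proof.
case/memBc => [[s [c [hs hc ->]]]|[-> _]].
  by rewrite card_blkl ?gl_uniq ?gl_lt.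
rewrite card_blkl //=; lia.
Qed.

Lemma Bc_uniq b1 b2 (x y : 'I_n.+1) : b1 \in Bc -> b2 \in Bc -> x != y ->
  x \in b1 -> y \in b1 -> x \in b2 -> y \in b2 -> b1 = b2.
Proof.
move=> h1 h2 xy0.
have xy : (nat_of_ord x) != (nat_of_ord y) :> nat by [].
case/memBc: h1 => [[s [c [hs hc ->]]]|[-> h4]];
case/memBc: h2 => [[t [d [ht hd ->]]]|[-> h4b]]; rewrite /blk /E ?memblk //.
- move=> x1 y1 x2 y2.
  by have [-> ->] := gl_inter hm ho hs ht hc hd xy x1 y1 x2 y2.
- move=> x1 y1 x2 y2; exfalso; move: x2 y2 xy.
  have [s1 _] := @shP m c s hc (ltac:(lia)).
  have [s2 _] := @shP m c (s + s) hc (ltac:(lia)).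
  move: x1 y1; rewrite /gl !inE.
  move: (sh m c s) (sh m c (s + s)) s1 s2 => a b s1 s2; lia.
- move=> x1 y1 x2 y2; exfalso; move: x1 y1 xy.
  have [s1 _] := @shP m d t hd (ltac:(lia)).
  have [s2 _] := @shP m d (t + t) hd (ltac:(lia)).
  move: x2 y2; rewrite /gl !inE.
  move: (sh m d t) (sh m d (t + t)) s1 s2 => a b s1 s2; lia.
Qed.

Lemma pack_Bc : is_packing 4 Bc.
Proof.
apply/andP; split.
  by apply/forallP => b; apply/implyP => hb; rewrite card_Bc.
apply/forallP => x; apply/forallP => y; apply/implyP => xy.
apply/card_le1_eqP => b1 b2; rewrite !inE => /andP[h1 /andP[x1 y1]] /andP[h2 /andP[x2 y2]].
exact: Bc_uniq h2 h1 xy x2 y2 x1 y1.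
Qed.

Lemma apoint b : b \in Bc -> exists i : 'I_3, (@inord n i) \in b.
Proof.
case/memBc => [[s [c [hs hc ->]]]|[-> _]].
  exists (Ordinal hs); rewrite /blk memblk inordK /= ?inE ?eqxx //; lia.
by exists ord0; rewrite /E memblk inordK /= ?inE ?eqxx //; lia.
Qed.

Lemma no4_Bc P : is_ppc Bc P -> #|P| != 4.
Proof.
case/ppcP => sP dP.
pose f (b : {set 'I_n.+1}) : 'I_3 := odflt ord0 [pick i : 'I_3 | (@inord n i) \in b].
have fP : forall b, b \in Bc -> (@inord n (f b)) \in b.
  move=> b hb; rewrite /f; case: pickP => [i //|none].
  by have [i hi] := apoint hb; have := none i; rewrite hi.
have inj : {in P &, injective f}.
  move=> b1 b2 h1 h2 e; apply/eqP; apply/negP => /negP ne.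
  have := dP b1 b2 h1 h2 ne; move/disjointP; apply.
    exact: fP (subsetP sP _ h1).
  by rewrite e; exact: fP (subsetP sP _ h2).
have : #|f @: P| <= 3 by apply: leq_trans (max_card _) _; rewrite card_ord.
by rewrite card_in_imset //; case: #|P| => [|[|[|[|]]]].
Qed.

Lemma G_sub : G \subset Bc.
Proof. by rewrite /Bc; case: ifP => // _; apply/subsetP => b hb; rewrite !inE hb orbT. Qed.

Lemma blk_in s c : s < 3 -> c < m -> blk s c \in Bc.
Proof.
move=> hs hc; apply: (subsetP G_sub); apply/imsetP.
by exists (Ordinal hs, Ordinal hc).
Qed.

Lemma disj_blkl l1 l2 : (forall z, z \in l1 -> z \in l2 -> False) ->
  [disjoint blkl l1 & blkl l2].
Proof. by move=> H; apply/disjointP => x; rewrite !memblk; apply: H. Qed.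

Lemma ne_disj (b b' : {set 'I_n.+1}) : [disjoint b & b'] -> #|b| = 4 -> b != b'.
Proof.
move=> d c; apply/negP => /eqP e; subst b'.
have : 0 < #|b| by rewrite c.
by case/card_gt0P => x xb; move/disjointP: d => /(_ x xb xb).
Qed.

Lemma ppc3 : exists P, is_ppc Bc P && (#|P| == 3).
Proof.
set b0 := blk 0 0; set b1 := blk 1 1; set b2 := blk 2 3.
have e0 : gl m off 0 0 = [:: 0; off; off + m; off + m + m].
  by rewrite /gl !shE ?addn0 //; lia.
have e1 : gl m off 1 1 = [:: 1; off + 1; off + m + 2; off + m + m + 3].
  by rewrite /gl !shE //; lia.
have e2 : gl m off 2 3 = [:: 2; off + 3; off + m + 5; off + m + m + 7].
  by rewrite /gl !shE //; lia.
have d01 : [disjoint b0 & b1].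
  by rewrite /b0 /b1 /blk e0 e1; apply: disj_blkl => z; rewrite !inE; lia.
have d02 : [disjoint b0 & b2].
  by rewrite /b0 /b2 /blk e0 e2; apply: disj_blkl => z; rewrite !inE; lia.
have d12 : [disjoint b1 & b2].
  by rewrite /b1 /b2 /blk e1 e2; apply: disj_blkl => z; rewrite !inE; lia.
have B0 : b0 \in Bc by apply: blk_in; lia.
have B1 : b1 \in Bc by apply: blk_in; lia.
have B2 : b2 \in Bc by apply: blk_in; lia.
have n01 := ne_disj d01 (card_Bc B0).
have n02 := ne_disj d02 (card_Bc B0).
have n12 := ne_disj d12 (card_Bc B1).
exists (b0 |: (b1 |: [set b2])); apply/andP; split.
  apply/ppcP; split.
    by apply/subsetP => c; rewrite !inE => /or3P[] /eqP->.
  move=> c1 c2; rewrite !inE => /or3P[] /eqP-> /or3P[] /eqP->; rewrite ?eqxx //;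
    by rewrite ?d01 ?d02 ?d12 // disjoint_sym ?d01 ?d02 ?d12.
by rewrite !cardsU1 cards1 !inE negb_or n01 n02 n12.
Qed.

Lemma card_G : #|G| = 3 * m.
Proof.
rewrite /G card_imset; first by rewrite card_prod !card_ord.
move=> [s c] [t d] /= e.
have hs := ltn_ord s; have ht := ltn_ord t; have hc := ltn_ord c; have hd := ltn_ord d.
have xy : (nat_of_ord s) != off + c by apply/eqP; lia.
have x1 : nat_of_ord s \in gl m off s c by rewrite inE eqxx.
have y1 : off + c \in gl m off s c by rewrite !inE eqxx orbT.
have x2 : nat_of_ord s \in gl m off t d.
  have : inord s \in blk t d by rewrite -e /blk memblk inordK //; lia.
  by rewrite /blk memblk inordK //; lia.
have y2 : off + c \in gl m off t d.
  have : inord (off + c) \in blk t d by rewrite -e /blk memblk inordK //; lia.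
  by rewrite /blk memblk inordK //; lia.
have [est ecd] := gl_inter hm ho hs ht hc hd xy x1 y1 x2 y2.
by congr pair; apply: val_inj.
Qed.

Lemma card_Bc_ge : 3 * m + (4 <= off) <= #|Bc|.
Proof.
rewrite /Bc; case: ifP => h4; last by rewrite card_G addn0.
have EG : E \notin G.
  apply/negP => /imsetP[[s c] _ e].
  have hs := ltn_ord s; have hc := ltn_ord c.
  have z0 : inord 0 \in blk s c by rewrite -e /E memblk inordK //=; lia.
  have z1 : inord 1 \in blk s c by rewrite -e /E memblk inordK //=; lia.
  move: z0 z1; rewrite /blk !memblk !inordK; try lia.
  have [s1 _] := @shP m c s hc (ltac:(lia)).
  have [s2 _] := @shP m c (s + s) hc (ltac:(lia)).
  rewrite /gl !inE; move: (sh m c s) (sh m c (s + s)) s1 s2 => a b s1 s2; lia.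
by rewrite cardsU1 card_G EG addnC.
Qed.

End Lower.

Lemma ar_low v m off b c : 147 <= v -> m = (v - 3) %/ 3 -> off = v - 3 * m ->
  3 * m + (4 <= off) <= c -> c <= b ->
  if v %% 3 == 2 then v - 5 <= b else v - 3 <= b.
Proof.
move=> hv em eo; case: (leqP 4 off) => h4 /= h1 h2; case: ifP => /eqP h; lia.
Qed.

Lemma ar_par v : 147 <= v -> 8 <= (v - 3) %/ 3 /\ 3 <= v - 3 * ((v - 3) %/ 3) /\
   v - 3 * ((v - 3) %/ 3) + 3 * ((v - 3) %/ 3) = v.
Proof. lia. Qed.

Theorem theorem4p3 (v : nat) (hv : 147 <= v) :
  beta 3 v 4 <= v - 2 /\
  (if v %% 3 == 2 then v - 5 <= beta 3 v 4 else v - 3 <= beta 3 v 4).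
Proof.
split.
  apply/bigmax_leqP => B /andP[pk mp].
  have no4 : forall P, is_ppc B P -> #|P| != 4.
    move=> P pP; apply/negP => /eqP c; case/andP: mp => _ /negP; apply.
    by apply/existsP; exists P; rewrite pP c.
  exact: upper pk no4 hv.
case: v hv => [//|n] hv.
have [hm [ho hvv]] := ar_par hv.
have lb : #|Bc n ((n.+1 - 3) %/ 3) (n.+1 - 3 * ((n.+1 - 3) %/ 3))| <= beta 3 n.+1 4.
  apply: leq_bigmax_cond; rewrite (pack_Bc hm ho hvv) /=.
  apply/andP; split; first by apply/existsP; exact: ppc3 hm ho hvv.
  apply/negP => /existsP[P /andP[pP /eqP cP]].
  by move: (no4_Bc hm ho hvv pP); rewrite cP.
exact: ar_low hv (erefl _) (erefl _) (card_Bc_ge hm ho hvv) lb.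
Qed.
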